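(* Let $(\Omega,\mathcal{F},\mathbf{P})$ be a probability space with $\sigma$-fields $\{\emptyset,\Omega\}=\mathcal{F}_0\subseteq\mathcal{F}_1\subseteq\cdots\subseteq\mathcal{F}_n\subseteq\mathcal{F}$, and let $(\xi_i,\mathcal{F}_i)_{i=1,\dots,n}$ be a sequence of supermartingale differences, i.e. each $\xi_i$ is real-valued, $\mathcal{F}_i$-measurable, integrable, and $\mathbf{E}(\xi_i\mid\mathcal{F}_{i-1})\le 0$. Let $\beta\in(1,2)$ be a constant and assume $\mathbf{E}|\xi_i|^\beta<\infty$ for all $i\in[1,n]$. Let $S_k=\sum_{i=1}^k\xi_i$ and \[ \mathrm{G}^0_k(\beta)=\sum_{i=1}^k\Big(\mathbf{E}\big((\xi_i^-)^\beta\mid\mathcal{F}_{i-1}\big)+(\xi_i^+)^\beta\Big),\qquad k\in[1,n], \] where $x^+=\max\{x,0\}$ and $x^-=-\min\{x,0\}$. Then for all $x,v>0$, \[ \mathbf{P}\Big(S_k\ge x\ \text{and}\ \mathrm{G}^0_k(\beta)\le v^\beta\ \text{for some}\ k\in[1,n]\Big)\le\exp\left\{-C(\beta)\left(\frac{x}{v}\right)^{\frac{\beta}{\beta-1}}\right\}, \] where $C(\beta)=\beta^{\frac{1}{1-\beta}}\left(1-\beta^{-1}\right)$. *)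

(* Defs.v *)
From HB Require Import structures.
From mathcomp Require Import all_boot all_order all_algebra.
From mathcomp Require Import all_classical all_reals all_analysis.
Set Implicit Arguments. Unset Strict Implicit. Unset Printing Implicit Defensive.
Import Order.TTheory GRing.Theory Num.Theory.
Import numFieldNormedType.Exports.
Local Open Scope classical_set_scope.
Local Open Scope ring_scope.

Definition sub_sigma_field d (T : measurableType d) (G : set (set T)) : Prop :=
  sigma_algebra setT G /\ G `<=` measurable.

Definition G_measurable d (T : measurableType d) (R : realType)
  (G : set (set T)) (Y : T -> R) : Prop :=
  forall B : set R, measurable B -> G (Y @^-1` B).

Definition is_cond_exp d (T : measurableType d) (R : realType)
  (P : probability T R) (G : set (set T)) (X Y : T -> R) : Prop :=
  [/\ G_measurable G Y,
      P.-integrable setT (EFin \o Y) &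
      forall A, G A ->
        (\int[P]_(w in A) (Y w)%:E = \int[P]_(w in A) (X w)%:E)%E].

Definition pos_part (R : realType) (x : R) : R := Num.max x 0.
Definition neg_part (R : realType) (x : R) : R := - Num.min x 0.

(* Main.v *)
Require Import Defs.
From HB Require Import structures.
From mathcomp Require Import all_boot all_order all_algebra.
From mathcomp Require Import all_classical all_reals all_analysis.
From mathcomp Require Import ring lra finmap measurable_realfun.
Import Order.TTheory GRing.Theory Num.Theory.
Import numFieldNormedType.Exports.
Local Open Scope classical_set_scope.
Local Open Scope ring_scope.


Lemma sq_le_powR (R : realType) (a b : R) : 0 <= a <= 1 -> b <= 2 -> a ^+ 2 <= a `^ b.
Proof.
move=> /andP[a0 a1] b2; have [->|an0] := eqVneq a 0.
  by rewrite expr2 mul0r powR_ge0.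
rewrite -powR_mulrn //; apply: ger_powR => //.
by rewrite a1 lt_neqAle eq_sym an0 a0.
Qed.

Lemma expR_le_aux (R : realType) (a c : R) : 0 <= c -> 1 <= c * expR (- a) -> expR a <= c.
Proof.
move=> c0 h.
have E : expR a * expR (- a) = 1 by rewrite -expRD subrr expR0.
have p := expR_gt0 a.
have q := expR_gt0 (- a).
nra.
Qed.

Lemma key_ineq (R : realType) (b y : R) : 1 < b < 2 ->
  expR (y - pos_part y `^ b) <= 1 + y + neg_part y `^ b.
Proof.
move=> /andP[b1 b2]; rewrite /pos_part /neg_part.
have b0 : b != 0 by rewrite gt_eqF // (lt_trans ltr01).
have [y0|y0] := leP 0 y.
  rewrite oppr0 powR0 // addr0.
  have [y1|y1] := leP 1 y.
    have : y <= y `^ b by apply: le1r_powR => //; exact: ltW.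
    move=> h; apply: (le_trans (y := expR 0)).
      by rewrite ler_expR; lra.
    by rewrite expR0; lra.
  have hs := @sq_le_powR _ y b (ltac:(apply/andP; split; lra)) (ltW b2).
  apply: (le_trans (y := expR (y - y ^+ 2))); first by rewrite ler_expR; lra.
  apply: expR_le_aux; first lra.
  have e := expR_ge1Dx (- (y - y ^+ 2)).
  apply: (le_trans (y := (1 + y) * (1 + - (y - y ^+ 2)))); last first.
    by apply: ler_wpM2l => //; lra.
  have : 0 <= y ^+ 3 by rewrite exprn_ge0.
  move=> h3; rewrite -[y ^+ 3]/(y * (y * y)) in h3. rewrite expr2. nra.
have yn : y <= 0 by exact: ltW.

rewrite powR0 // subr0.
have [y1|y1] := leP (-1) y.
  have hs := @sq_le_powR _ (- y) b (ltac:(apply/andP; split; lra)) (ltW b2).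
  rewrite sqrrN in hs.
  apply: (le_trans (y := 1 + y + y ^+ 2)); last by lra.
  apply: expR_le_aux; first by rewrite expr2; nra.
  have e := expR_ge1Dx (- y).
  apply: (le_trans (y := (1 + y + y ^+ 2) * (1 + - y))); last first.
    by apply: ler_wpM2l => //; rewrite expr2; nra.
  rewrite expr2; nra.
have : - y <= (- y) `^ b by apply: le1r_powR; lra.
move=> h; apply: (le_trans (y := expR 0)); first by rewrite ler_expR.
rewrite expR0; lra.
Qed.


Section condL.
Context d (T : measurableType d) (R : realType) (P : probability T R) (G : set (set T)).
Hypotheses (sG : sigma_algebra setT G) (GT : G `<=` measurable).
Local Notation T' := (g_sigma_algebraType G).

Lemma gmeasE (A : set T) : @measurable _ T' A -> G A.
Proof. by rewrite (measurable_g_measurableTypeE sG). Qed.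

Lemma gmeas_meas (f : T -> R) : measurable_fun (setT : set T') f ->
  measurable_fun (setT : set T) f.
Proof.
move=> mf _ B mB; rewrite setTI; apply: GT; apply: gmeasE.
by have := mf measurableT B mB; rewrite setTI.
Qed.

Lemma G_meas_gmeas (f : T -> R) : G_measurable G f ->
  measurable_fun (setT : set T') f.
Proof.
move=> h _ B mB; rewrite setTI; apply: sub_sigma_algebra; exact: h B mB.
Qed.

Import HBNNSimple.

Lemma fset_range_ge0 (f : {nnsfun T' >-> R}) (i : nat) :
  (i < size (finmap.enum_fset (fset_set (range f))))%N ->
  0 <= (finmap.enum_fset (fset_set (range f)))`_i.
Proof.
move=> hi; have h : (finmap.enum_fset (fset_set (range f)))`_i \in fset_set (range f) := mem_nth 0 hi.
move: h; rewrite in_fset_set; last exact: fimfunP.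
by move=> /set_mem [w _ <-]; exact: fun_ge0.
Qed.

Lemma simple_int (f : {nnsfun T' >-> R}) (Z : T -> R) :
  (forall w, 0 <= Z w) -> measurable_fun setT Z ->
  let s := finmap.enum_fset (fset_set (range f)) in
  (\int[P]_w (f w * Z w)%:E = \sum_(i < size s) (s`_i)%:E *
      \int[P]_(w in (f : T -> R) @^-1` [set s`_i]) (Z w)%:E)%E.
Proof.
move=> Z0 mZ s.
have mA i : measurable ((f : T -> R) @^-1` [set s`_i]).
  by apply: GT; apply: gmeasE; exact: (measurable_sfunP f (measurable_set1 _)).
have s0 (i : 'I_(size s)) : 0 <= s`_i by apply: fset_range_ge0.
under eq_integral => w _ do rewrite (fimfunEord f w) mulr_suml -sumEFin.
have mI (i : 'I_(size s)) : measurable_fun (setT : set T) ((fun w => (s`_i * \1_((f : T -> R) @^-1` [set s`_i]) w * Z w)%:E) : T -> \bar R).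
  apply/measurable_EFinP; apply: measurable_funM => //.
  by apply: measurable_funM => //; exact: measurable_indic.
have pI (i : 'I_(size s)) w : setT w -> (0 <= (s`_i * \1_((f : T -> R) @^-1` [set s`_i]) w * Z w)%:E)%E.
  by move=> _; rewrite lee_fin !mulr_ge0.
rewrite ge0_integral_sum //.
apply: eq_bigr => i _.
under eq_integral do rewrite -mulrA EFinM.
rewrite ge0_integralZl //; last 2 first.
- by move=> w _; rewrite lee_fin mulr_ge0 // indicE.
- by rewrite lee_fin.
congr (_ * _)%E; rewrite [in RHS]integral_mkcond; apply: eq_integral => w _.
rewrite /patch indicE; case: ifP => _; rewrite ?mul1r ?mul0r //.
by apply/measurable_EFinP; apply: measurable_funM => //; exact: measurable_indic.
Qed.

Lemma int_le_pos (A : set T) (Y : T -> R) :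
  (\int[P]_(w in A) (Y w)%:E <= \int[P]_(w in A) (Num.max (Y w) 0)%:E)%E.
Proof.
rewrite integralE.
have -> : (\int[P]_(w in A) (Num.max (Y w) 0)%:E = \int[P]_(w in A) (EFin \o Y)^\+ w)%E.
  by apply: eq_integral => w _; rewrite funeposE /= EFin_max.
rewrite -[leRHS]sube0; apply: leeB => //.
by apply: integral_ge0 => w _; exact: funeneg_ge0.
Qed.

Lemma condL (H X Y : T -> R) :
  (forall w, 0 <= H w) -> measurable_fun (setT : set T') H ->
  (forall w, 0 <= X w) -> P.-integrable setT (EFin \o X) ->
  P.-integrable setT (EFin \o Y) ->
  (forall A, G A -> (\int[P]_(w in A) (Y w)%:E = \int[P]_(w in A) (X w)%:E)%E) ->
  (\int[P]_w (H w * X w)%:E <= \int[P]_w (H w * Num.max (Y w) 0)%:E)%E.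
Proof.
move=> H0 mH X0 iX iY hXY.
have mX : measurable_fun setT X by apply/measurable_EFinP; exact: measurable_int iX.
have mY : measurable_fun setT Y by apply/measurable_EFinP; exact: measurable_int iY.
have mM : measurable_fun setT (fun w => Num.max (Y w) 0).
  by apply: measurable_maxr => //; exact: measurable_cst.
have M0 w : 0 <= Num.max (Y w) 0 by rewrite le_max lexx orbT.
have mHT := @gmeas_meas H mH.
have mH' : measurable_fun (setT : set T') (EFin \o H) by exact/measurable_EFinP.
pose h := nnsfun_approx (@measurableT _ T') mH'.
have hH n w : h n w <= H w.
  rewrite -lee_fin /h nnsfun_approxE; apply: le_approx => //.
  by move=> x _; rewrite lee_fin.
have h0 n w : 0 <= h n w by exact: fun_ge0.
have mh n : measurable_fun setT (h n : T -> R).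
  exact: (@gmeas_meas (h n) (measurable_funPT (h n))).
have step1 n : (\int[P]_w (h n w * X w)%:E <= \int[P]_w (H w * Num.max (Y w) 0)%:E)%E.
  apply: (le_trans (y := \int[P]_w (h n w * Num.max (Y w) 0)%:E)%E).
    rewrite (@simple_int (h n) X X0 mX) (@simple_int (h n) _ M0 mM).
    apply: lee_sum => i _; apply: lee_wpmul2l; first by rewrite lee_fin fset_range_ge0.
    rewrite -hXY; first exact: int_le_pos.
    by apply: gmeasE; exact: (measurable_sfunP (h n) (measurable_set1 _)).
  apply: ge0_le_integral => //.
  - by move=> w _; rewrite lee_fin mulr_ge0.
  - by apply/measurable_EFinP; exact: measurable_funM.
  - by apply/measurable_EFinP; exact: measurable_funM.
  - by move=> w _; rewrite lee_fin ler_wpM2r.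
have mg n : measurable_fun (setT : set T) (fun w : T => (h n w * X w)%:E).
  by apply/measurable_EFinP; exact: measurable_funM.
have g0 n (w : T) : setT w -> (0 <= (h n w * X w)%:E)%E by move=> _; rewrite lee_fin mulr_ge0.
have ndg (w : T) : setT w -> {homo (fun n => (h n w * X w)%:E) : a b / (a <= b)%N >-> (a <= b)%E}.
  move=> _ a b ab; rewrite lee_fin ler_wpM2r //.
  by have := nd_nnsfun_approx (@measurableT _ T') mH' ab => /lefP.
have cv := @cvg_monotone_convergence _ T R P setT measurableT _ mg g0 ndg.
have lim_eq w : limn (fun n => (h n w * X w)%:E) = (H w * X w)%:E.
  apply/cvg_lim => //.
  have c1 := @cvg_nnsfun_approx _ T' R setT measurableT (EFin \o H) mH' (fun x _ => H0 x) w I.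
  have c2 := cvgeZr (y := (X w)%:E) (fin_numE _) c1.
  rewrite EFinM; under eq_fun do rewrite EFinM; exact: c2.
have -> : (\int[P]_w (H w * X w)%:E = \int[P]_(w in setT) (fun x : T => limn (fun n => (h n x * X x)%:E)) w)%E.
  by apply: eq_integral => w _; rewrite lim_eq.
rewrite -(cvg_lim _ cv) //; apply: lime_le; first by apply/cvg_ex; eexists; exact: cv.
by apply: nearW => n; exact: step1.
Qed.

End condL.


Lemma pos_partM (R : realType) (l a : R) : 0 < l -> pos_part (l * a) = l * pos_part a.
Proof.
move=> l0; rewrite /pos_part; have [a0|a0] := leP 0 a.
  by have -> : Num.max (l * a) 0 = l * a by apply/max_idPl; exact: mulr_ge0 (ltW l0) a0.
have -> : Num.max (l * a) 0 = 0 by apply/max_idPr; rewrite pmulr_rle0 // ltW.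
by rewrite mulr0.
Qed.

Lemma neg_partM (R : realType) (l a : R) : 0 < l -> neg_part (l * a) = l * neg_part a.
Proof.
move=> l0; rewrite /neg_part; have [a0|a0] := leP 0 a.
  have -> : Num.min (l * a) 0 = 0 by apply/min_idPr; exact: mulr_ge0 (ltW l0) a0.
by rewrite oppr0 mulr0.
have -> : Num.min (l * a) 0 = l * a by apply/min_idPl; rewrite pmulr_rle0 // ltW.
by rewrite mulrN.
Qed.

Lemma pos_part_ge0 (R : realType) (a : R) : 0 <= pos_part a.
Proof. by rewrite /pos_part le_max lexx orbT. Qed.

Lemma neg_part_ge0 (R : realType) (a : R) : 0 <= neg_part a.
Proof. by rewrite /neg_part oppr_ge0 ge_min lexx orbT. Qed.

Lemma sigma_setT (T : Type) (G : set (set T)) : sigma_algebra setT G -> G setT.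
Proof. by case=> G0 GC _; have := GC set0 G0; rewrite setD0. Qed.

Lemma exp_aux (R : realType) (u : R) : expR (- u) * Num.max (1 + u) 0 <= 1.
Proof.
have [h|h] := leP (1 + u) 0.
  by rewrite mulr0.
have e := expR_ge1Dx u; have E : expR (- u) * expR u = 1 by rewrite -expRD addNr expR0.
have p := expR_gt0 (- u); nra.
Qed.

Lemma lin3 d (T : measurableType d) (R : realType) (P : probability T R) (A : set T)
  (f g : T -> R) (a b : R) :
  measurable A -> P.-integrable setT (EFin \o f) -> P.-integrable setT (EFin \o g) ->
  (\int[P]_(w in A) (1 + a * f w + b * g w)%:E =
   \int[P]_(w in A) (EFin \o cst 1%R) w + a%:E * \int[P]_(w in A) (f w)%:E
     + b%:E * \int[P]_(w in A) (g w)%:E)%E.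
Proof.
move=> mA iF iG.
have iFA : P.-integrable A (EFin \o f) := integrableS measurableT mA (subsetT _) iF.
have iGA : P.-integrable A (EFin \o g) := integrableS measurableT mA (subsetT _) iG.
have i1 : P.-integrable A (EFin \o cst 1%R) := finite_measure_integrable_cst P 1 mA.
have iaf : P.-integrable A (fun w => a%:E * (EFin \o f) w)%E := integrableZl mA a iFA.
have ibg : P.-integrable A (fun w => b%:E * (EFin \o g) w)%E := integrableZl mA b iGA.
under eq_integral do rewrite !EFinD !EFinM.
rewrite integralD //; last exact: integrableD.
rewrite integralD //.
by rewrite !integralZl.
Qed.

Lemma integrable_lin3 d (T : measurableType d) (R : realType) (P : probability T R)
  (f g : T -> R) (a b : R) :
  P.-integrable setT (EFin \o f) -> P.-integrable setT (EFin \o g) ->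
  P.-integrable setT (EFin \o (fun w => 1 + a * f w + b * g w)).
Proof.
move=> iF iG.
have i1 : P.-integrable setT (EFin \o cst 1%R) := finite_measure_integrable_cst P 1 measurableT.
have iaf : P.-integrable setT (fun w => a%:E * (EFin \o f) w)%E := integrableZl measurableT a iF.
have ibg : P.-integrable setT (fun w => b%:E * (EFin \o g) w)%E := integrableZl measurableT b iG.
have := integrableD measurableT (integrableD measurableT i1 iaf) ibg.
by apply: eq_integrable => // w _; rewrite /= !EFinD !EFinM.
Qed.

Lemma superstep d (T : measurableType d) (R : realType) (P : probability T R)
  (G : set (set T)) (b lam : R) (Z xi Yx Yn : T -> R) (B : set T) :
  sigma_algebra setT G -> G `<=` measurable -> 1 < b < 2 -> 0 < lam ->
  G B -> (forall w, 0 <= Z w) ->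
  measurable_fun (setT : set (g_sigma_algebraType G)) Z ->
  measurable_fun setT xi -> P.-integrable setT (EFin \o xi) ->
  is_cond_exp P G xi Yx -> {ae P, forall w, Yx w <= 0} ->
  is_cond_exp P G (fun w => neg_part (xi w) `^ b) Yn ->
  (\int[P]_w (\1_B w * (Z w * expR (lam * xi w - lam `^ b * (Yn w + pos_part (xi w) `^ b))))%:E
   <= \int[P]_w (\1_B w * Z w)%:E)%E.
Proof.
move=> sG GT hb hlam GB Z0 mZ mxi ixi [mYx iYx hYx] aeY [mYn iYn hYn].
set c := lam `^ b.
have c0 : 0 < c by apply: powR_gt0.
pose H w := \1_B w * Z w * expR (- (c * Yn w)).
pose X w := 1 + lam * xi w + c * neg_part (xi w) `^ b.
pose Y w := 1 + lam * Yx w + c * Yn w.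
have b0 : 0 <= b by case/andP: hb => h _; apply: ltW; exact: lt_trans ltr01 h.
have keyX w : expR (lam * xi w - c * pos_part (xi w) `^ b) <= X w.
  have := @key_ineq _ b (lam * xi w) hb.
  rewrite pos_partM // neg_partM // !powRM ?pos_part_ge0 ?neg_part_ge0 //; exact: ltW.
have X0 w : 0 <= X w by apply: le_trans (keyX w); exact: ltW (expR_gt0 _).
have mB : measurable B by exact: GT.
have mYnT : measurable_fun setT Yn.
  by move=> _ A mA; rewrite setTI; apply: GT; apply: mYn.
have mYnG : measurable_fun (setT : set (g_sigma_algebraType G)) Yn := @G_meas_gmeas _ _ _ _ _ mYn.
have mHG : measurable_fun (setT : set (g_sigma_algebraType G)) H.
  apply: measurable_funM; first apply: measurable_funM => //.
    by apply: measurable_indic; apply: sub_sigma_algebra.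
  apply: measurableT_comp; first exact: measurable_expR.
  by apply: measurable_funN; apply: measurable_funM => //; exact: measurable_cst.
have mHT : measurable_fun setT H := @gmeas_meas _ _ _ _ sG GT _ mHG.
have mZT : measurable_fun setT Z := @gmeas_meas _ _ _ _ sG GT _ mZ.
have H0 w : 0 <= H w by rewrite /H !mulr_ge0 // ?indicE // ltW // expR_gt0.
have mneg : measurable_fun setT (fun w => neg_part (xi w) `^ b).
  apply: (measurableT_comp (measurable_powR b)); rewrite /neg_part.
  apply: measurable_funN; apply: measurable_minr => //; exact: measurable_cst.
have ineg : P.-integrable setT (EFin \o (fun w => neg_part (xi w) `^ b)).
  apply/integrableP; split; first exact/measurable_EFinP.
  have -> : (\int[P]_x `|(EFin \o (fun w : T => (neg_part (xi w) `^ b)%R)) x| = \int[P]_x (neg_part (xi x) `^ b)%:E)%E.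
    by apply: eq_integral => w _; rewrite gee0_abs // lee_fin powR_ge0.
  rewrite -hYn; last exact: sigma_setT.
  by rewrite ltey_eq (integrable_fin_num measurableT iYn).
have iX : P.-integrable setT (EFin \o X) by exact: integrable_lin3.
have iY : P.-integrable setT (EFin \o Y) by exact: integrable_lin3.
have hXY A : G A -> (\int[P]_(w in A) (Y w)%:E = \int[P]_(w in A) (X w)%:E)%E.
  by move=> GA; have mA := GT _ GA; rewrite /X /Y !lin3 // hYx // hYn.
have step2 := @condL _ _ _ P _ sG GT _ _ _ H0 mHG X0 iX iY hXY.
have mX : measurable_fun setT X.
  by apply/measurable_EFinP; exact: measurable_int iX.
have mY : measurable_fun setT Y.
  by apply/measurable_EFinP; exact: measurable_int iY.
have mpos : measurable_fun setT (fun w => pos_part (xi w) `^ b).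
  apply: (measurableT_comp (measurable_powR b)); rewrite /pos_part.
  by apply: measurable_maxr => //; exact: measurable_cst.
apply: (le_trans (y := \int[P]_w (H w * X w)%:E)%E).
  apply: ge0_le_integral => //.
  - by move=> w _; rewrite lee_fin mulr_ge0 // ?indicE // mulr_ge0 // ltW // expR_gt0.
  - apply/measurable_EFinP; apply: measurable_funM; first exact: measurable_indic.
    apply: measurable_funM => //; apply: measurableT_comp; first exact: measurable_expR.
    apply: measurable_funB; first by apply: measurable_funM => //; exact: measurable_cst.
    apply: measurable_funM; first exact: measurable_cst.
    exact: measurable_funD.
  - by apply/measurable_EFinP; exact: measurable_funM.
  - move=> w _; rewrite lee_fin.
    have -> : \1_B w * (Z w * expR (lam * xi w - c * (Yn w + pos_part (xi w) `^ b)))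
       = H w * expR (lam * xi w - c * pos_part (xi w) `^ b).
      rewrite /H -!mulrA; congr (_ * (_ * _)); rewrite -expRD; congr expR; ring.
    by apply: ler_wpM2l => //; exact: keyX.
apply: (le_trans step2).
apply: ae_ge0_le_integral => //.
- by move=> w _; rewrite lee_fin mulr_ge0 // le_max lexx orbT.
- apply/measurable_EFinP; apply: measurable_funM => //.
  by apply: measurable_maxr => //; exact: measurable_cst.
- by move=> w _; rewrite lee_fin mulr_ge0 // indicE.
- by apply/measurable_EFinP; apply: measurable_funM => //; exact: measurable_indic.
apply: filterS aeY => w hw _; rewrite lee_fin.
have I0 : 0 <= \1_B w * Z w by rewrite mulr_ge0 // indicE.
rewrite /H -(mulrA (_ * _)) -[leRHS]mulr1; apply: ler_wpM2l => //.
have := @exp_aux _ (c * Yn w).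
have e0 := expR_gt0 (- (c * Yn w)).
have hY : Y w <= 1 + c * Yn w.
  rewrite /Y; have : lam * Yx w <= 0 by rewrite pmulr_rle0.
  lra.
have [h|h] := leP (Y w) 0.
  by move=> _; rewrite mulr0.
have [h2|h2] := leP (1 + c * Yn w) 0; first lra.
move=> h3; apply: (le_trans _ h3); by rewrite ler_pM2l.
Qed.


Lemma powR_pos (R : realType) (a r : R) : 0 < a -> a `^ r = expR (r * ln a).
Proof. by move=> a0; rewrite /powR gt_eqF. Qed.

Lemma exponent_eq (R : realType) (b x v : R) : 1 < b -> 0 < x -> 0 < v ->
  let lam := (x / (b * v `^ b)) `^ (1 / (b - 1)) in
  lam * x - lam `^ b * v `^ b =
  b `^ (1 / (1 - b)) * (1 - b^-1) * (x / v) `^ (b / (b - 1)).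
Proof.
move=> b1 x0 v0 lam.
have b0 : 0 < b by exact: lt_trans ltr01 b1.
have bm1 : b - 1 != 0 by rewrite subr_eq0 gt_eqF.
set p := 1 / (b - 1).
have hp : b * p = p + 1 by rewrite /p; field.
have b1' : 1 - b != 0 by rewrite subr_eq0 lt_eqF.
have hq : 1 / (1 - b) = - p.
  by rewrite /p; field; rewrite bm1 b1'.
have hr : b / (b - 1) = p + 1 by rewrite -hp /p; field.
have vb : 0 < v `^ b := powR_gt0 _ v0.
set L := ln (x / (b * v `^ b)).
have eL : expR L = x / (b * v `^ b) by rewrite lnK // posrE divr_gt0 // mulr_gt0.
have hlam : lam = expR (p * L) by rewrite /lam powR_pos // divr_gt0 // mulr_gt0.
have hlamb : lam `^ b = expR (p * L) * (x / (b * v `^ b)).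
  by rewrite hlam powR_pos ?expR_gt0 // expRK -eL -expRD; congr expR; rewrite mulrA hp; ring.
rewrite hlamb hq hr {1}hlam.
have -> : expR (p * L) * x - expR (p * L) * (x / (b * v `^ b)) * v `^ b
  = expR (p * L) * x * (1 - b^-1).
  by field; rewrite (gt_eqF b0) (gt_eqF vb).
rewrite [RHS]mulrAC; congr (_ * _).
rewrite !powR_pos ?divr_gt0 // -{1}(lnK (x:=x)) ?posrE // -!expRD.
congr expR.
rewrite /L !lnM ?posrE ?invr_gt0 ?mulr_gt0 // !lnV ?posrE ?mulr_gt0 //.
rewrite lnM ?posrE // ln_powR.
apply/eqP; rewrite -subr_eq0; apply/eqP.
transitivity (ln v * (p + 1 - b * p)); first ring.
by rewrite hp subrr mulr0.
Qed.


Lemma meas_le_set d (T : measurableType d) (R : realType) (f : T -> R) (a : R) :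
  measurable_fun setT f ->
  measurable [set w | a <= f w] /\ measurable [set w | f w <= a].
Proof.
move=> mf; split.
  have := mf measurableT _ (measurable_itv `[a, +oo[); rewrite setTI.
  suff -> : [set w | a <= f w] = f @^-1` `[a, +oo[%classic by [].
  by apply/seteqP; split => w; rewrite /= in_itv /= andbT.
have := mf measurableT _ (measurable_itv `]-oo, a]); rewrite setTI.
suff -> : [set w | f w <= a] = f @^-1` `]-oo, a]%classic by [].
by apply/seteqP; split => w; rewrite /= in_itv /=.
Qed.

Lemma min_ex (Q : nat -> Prop) k : Q k -> exists m, Q m /\ forall j, (j < m)%N -> ~ Q j.
Proof.
move=> Qk; have ex : exists k, `[< Q k >] by exists k; exact/asboolP.
case: (ex_minnP ex) => m /asboolP Qm hmin; exists m; split => // j jm Qj.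
by have := hmin j (introT (asboolP _) Qj); rewrite leqNgt jm.
Qed.

Lemma mpowpos d (T : measurableType d) (R : realType) (f : T -> R) (b : R) :
  measurable_fun setT f -> measurable_fun setT (fun w => pos_part (f w) `^ b).
Proof.
move=> mf; apply: (measurableT_comp (measurable_powR b)); rewrite /pos_part.
by apply: measurable_maxr => //; exact: measurable_cst.
Qed.

Theorem theorem2p2 (d : measure_display) (T : measurableType d) (R : realType)
  (P : probability T R) (n : nat) (F : nat -> set (set T))
  (xi : nat -> T -> R) (beta : R) :
  (* filtration {emptyset, Omega} = F_0 <= F_1 <= ... <= F_n <= F *)
  F 0%N = [set set0; setT] ->
  (forall i, (i <= n)%N -> sub_sigma_field (F i)) ->
  (forall i, (i < n)%N -> F i `<=` F i.+1) ->
  (* supermartingale differences *)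
  (forall i, (1 <= i <= n)%N ->
     [/\ G_measurable (F i) (xi i),
         P.-integrable setT (EFin \o xi i) &
         exists Y, is_cond_exp P (F i.-1) (xi i) Y /\
                   {ae P, forall w, Y w <= 0}]) ->
  1 < beta < 2 ->
  (forall i, (1 <= i <= n)%N ->
     (\int[P]_w ((`|xi i w| `^ beta)%:E) < +oo)%E) ->
  (* Yneg i is a version of E((xi_i^-)^beta | F_{i-1}) *)
  forall Yneg : nat -> T -> R,
  (forall i, (1 <= i <= n)%N ->
     is_cond_exp P (F i.-1) (fun w => neg_part (xi i w) `^ beta) (Yneg i)) ->
  forall x v : R, 0 < x -> 0 < v ->
  let Ssum k w := \sum_(1 <= i < k.+1) xi i w in
  let G0 k w := \sum_(1 <= i < k.+1)
                   (Yneg i w + pos_part (xi i w) `^ beta) in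
  let C := beta `^ (1 / (1 - beta)) * (1 - beta^-1) in
  (P [set w | exists k, (1 <= k <= n)%N /\ (x <= Ssum k w)%R /\ (G0 k w <= v `^ beta)%R]
    <= (expR (- C * (x / v) `^ (beta / (beta - 1))))%:E)%E.
Proof.
move=> hF0 hsub hmono hmart hb _ Yneg hYneg x v hx hv.
pose Ssum k w := \sum_(1 <= i < k.+1) xi i w.
pose G0 k w := \sum_(1 <= i < k.+1) (Yneg i w + pos_part (xi i w) `^ beta).
pose C := beta `^ (1 / (1 - beta)) * (1 - beta^-1).
change (P [set w | exists k, (1 <= k <= n)%N /\ (x <= Ssum k w)%R /\ (G0 k w <= v `^ beta)%R]
    <= (expR (- C * (x / v) `^ (beta / (beta - 1))))%:E)%E.
have b1 : 1 < beta by case/andP: hb.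
have sF i : (i <= n)%N -> sigma_algebra setT (F i) by move=> /hsub [].
have FT i : (i <= n)%N -> F i `<=` measurable by move=> /hsub [].
have Fmono i j : (i <= j)%N -> (j <= n)%N -> F i `<=` F j.
  move=> ij jn; elim: j ij jn => [|j IH] ij jn.
    by rewrite leqn0 in ij; move/eqP: ij => ->.
  move: ij; rewrite leq_eqVlt => /predU1P[->//|ij].
  move=> A /(IH ij (ltnW jn)); exact: hmono.
have gmono i j (f : T -> R) : (i <= j)%N -> (j <= n)%N ->
    measurable_fun (setT : set (g_sigma_algebraType (F i))) f ->
    measurable_fun (setT : set (g_sigma_algebraType (F j))) f.
  move=> ij jn mf _ B mB; rewrite setTI; apply: sub_sigma_algebra.
  apply: (Fmono i j ij jn); apply: (@gmeasE _ _ _ (sF i (leq_trans ij jn))).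
  by have := mf measurableT B mB; rewrite setTI.
have mxiF i : (1 <= i <= n)%N ->
    measurable_fun (setT : set (g_sigma_algebraType (F i))) (xi i).
  by move=> /hmart [h _ _]; exact: G_meas_gmeas.
have mYnF i : (1 <= i <= n)%N ->
    measurable_fun (setT : set (g_sigma_algebraType (F i.-1))) (Yneg i).
  by move=> /hYneg [h _ _]; exact: G_meas_gmeas.
have S0 w : Ssum 0%N w = 0 by rewrite /Ssum big_geq.
have G00 w : G0 0%N w = 0 by rewrite /G0 big_geq.
have SS k w : Ssum k.+1 w = Ssum k w + xi k.+1 w by rewrite /Ssum big_nat_recr.
have GS k w : G0 k.+1 w = G0 k w + (Yneg k.+1 w + pos_part (xi k.+1 w) `^ beta).
  by rewrite /G0 big_nat_recr.
have mSG k : (k <= n)%N ->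
    measurable_fun (setT : set (g_sigma_algebraType (F k))) (Ssum k) /\
    measurable_fun (setT : set (g_sigma_algebraType (F k))) (G0 k).
  elim: k => [|k IH] kn.
    split.
      by rewrite (_ : Ssum 0%N = cst 0); [exact: measurable_cst|apply/funext => w; exact: S0].
    by rewrite (_ : G0 0%N = cst 0); [exact: measurable_cst|apply/funext => w; exact: G00].
  have [mS mG] := IH (ltnW kn).
  have kn' : (1 <= k.+1 <= n)%N by rewrite kn.
  split.
    rewrite (_ : Ssum k.+1 = Ssum k \+ xi k.+1); last by apply/funext => w; exact: SS.
    by apply: measurable_funD; [exact: (gmono k k.+1 _ (leqnSn _) kn)|exact: mxiF].
  rewrite (_ : G0 k.+1 = G0 k \+ (Yneg k.+1 \+ fun w => pos_part (xi k.+1 w) `^ beta)); last first.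
    by apply/funext => w; exact: GS.
  apply: measurable_funD; first exact: (gmono k k.+1 _ (leqnSn _) kn).
  apply: measurable_funD; first exact: (gmono k k.+1 _ (leqnSn _) kn) (mYnF _ kn').
  by apply: mpowpos; exact: mxiF.
pose A k := [set w | x <= Ssum k w /\ G0 k w <= v `^ beta].
have mA k : (k <= n)%N -> F k (A k).
  move=> kn; apply: (@gmeasE _ _ _ (sF k kn)).
  have [mS mG] := mSG k kn.
  have [h1 _] := @meas_le_set _ _ _ _ x mS; have [_ h2] := @meas_le_set _ _ _ _ (v `^ beta) mG.
  by have := measurableI _ _ h1 h2.
pose Bs := fix Bs k := if k is k'.+1 then Bs k' `\` A k' else setT.
have BsS k : Bs k.+1 = Bs k `\` A k by [].
have mBs k : (k <= n)%N -> F k (Bs k.+1).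
  elim: k => [|k IH] kn.
    apply: (@gmeasE _ _ _ (sF 0%N kn)); rewrite BsS.
    apply: measurableD; first exact: measurableT.
    by apply: sub_sigma_algebra; exact: (mA 0%N kn).
  apply: (@gmeasE _ _ _ (sF k.+1 kn)); rewrite BsS.
  apply: measurableD; apply: sub_sigma_algebra; last exact: mA.
  exact: (Fmono k k.+1 (leqnSn _) kn) (IH (ltnW kn)).
have BsP k w : Bs k w <-> forall j, (j < k)%N -> ~ A j w.
  elim: k => [|k IH]; first by split => // _ j.
  rewrite BsS; split.
    move=> [/IH h nA] j; rewrite ltnS leq_eqVlt => /predU1P[->//|]; exact: h.
  move=> h; split; first by apply/IH => j jk; apply: h; exact: ltnW.
  exact: h.
have b0 : 0 < beta by exact: lt_trans ltr01 b1.
pose lam := (x / (beta * v `^ beta)) `^ (1 / (beta - 1)).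
have lam0 : 0 < lam by apply: powR_gt0; rewrite divr_gt0 // mulr_gt0 // powR_gt0.
pose c := lam `^ beta.
have c0 : 0 < c by exact: powR_gt0.
pose Z k w := expR (lam * Ssum k w - c * G0 k w).
have Z0 k w : 0 <= Z k w by exact: ltW (expR_gt0 _).
have ZS k w : Z k.+1 w = Z k w * expR (lam * xi k.+1 w - c * (Yneg k.+1 w + pos_part (xi k.+1 w) `^ beta)).
  by rewrite /Z SS GS -expRD; congr expR; ring.
have Zz w : Z 0%N w = 1 by rewrite /Z S0 G00 !mulr0 subr0 expR0.
have mZ k : (k <= n)%N -> measurable_fun (setT : set (g_sigma_algebraType (F k))) (Z k).
  move=> kn; have [mS mG] := mSG k kn.
  apply: (measurableT_comp (@measurable_expR R)).
  by apply: measurable_funB; apply: measurable_funM => //; exact: measurable_cst.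
have step k B : (k < n)%N -> F k B ->
    (\int[P]_w (\1_B w * Z k.+1 w)%:E <= \int[P]_w (\1_B w * Z k w)%:E)%E.
  move=> kn FB.
  have kn' : (1 <= k.+1 <= n)%N by rewrite kn.
  have [mxi ixi [Yx [cYx aeY]]] := hmart _ kn'.
  have cYn := hYneg _ kn'.
  under eq_integral do rewrite ZS.
  apply: (@superstep _ _ _ P (F k) beta lam (Z k) (xi k.+1) Yx (Yneg k.+1) B) => //.
  - exact: sF (ltnW kn).
  - exact: FT (ltnW kn).
  - exact: mZ (ltnW kn).
  - exact: (@gmeas_meas _ _ _ _ (sF _ kn) (FT _ kn) _ (mxiF _ kn')).
pose I1 k := (\int[P]_w (\1_(Bs k `&` A k) w * Z k w)%:E)%E.
pose I2 k := (\int[P]_w (\1_(Bs k.+1) w * Z k w)%:E)%E.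
have mBT k : (k <= n)%N -> measurable (Bs k.+1) by move=> kn; exact: FT k kn _ (mBs k kn).
have mAT k : (k <= n)%N -> measurable (A k) by move=> kn; exact: FT k kn _ (mA k kn).
have mZT k : (k <= n)%N -> measurable_fun setT (Z k).
  by move=> kn; exact: (@gmeas_meas _ _ _ _ (sF _ kn) (FT _ kn) _ (mZ k kn)).
have tele m : (m <= n)%N -> (\sum_(1 <= k < m.+1) I1 k + I2 m <= 1)%E.
  elim: m => [|m IH] mn.
    rewrite big_geq // add0e /I2.
    under eq_integral do rewrite Zz mulr1.
    rewrite integral_indic //; last exact: mBT.
    by apply: probability_le1; apply: measurableI => //; exact: mBT.
  rewrite big_nat_recr //= -addeA.
  apply: le_trans (IH (ltnW mn)); apply: leeD2l.
  have -> : (I1 m.+1 + I2 m.+1 = \int[P]_w (\1_(Bs m.+1) w * Z m.+1 w)%:E)%E.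
    rewrite /I1 /I2 -ge0_integralD //.
    - apply: eq_integral => w _; rewrite -EFinD -mulrDl (BsS m.+1) !indicE.
      rewrite in_setI in_setD; case: (w \in Bs m.+1); case: (w \in A m.+1);
        by rewrite /= ?addr0 ?add0r.
    - by move=> w _; rewrite lee_fin mulr_ge0 // indicE.
    - apply/measurable_EFinP; apply: measurable_funM; last exact: mZT.
      apply: measurable_indic; apply: measurableI; [exact: (mBT m (ltnW mn))|exact: mAT].
    - by move=> w _; rewrite lee_fin mulr_ge0 // indicE.
    - apply/measurable_EFinP; apply: measurable_funM; last exact: mZT.
      by apply: measurable_indic; exact: mBT.
  exact: step m (Bs m.+1) mn (mBs m (ltnW mn)).
set E := [set w | exists k, _].
have EU : E = \bigcup_(k in [set k | (1 <= k <= n)%N]) A k.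
  by apply/seteqP; split => w /= [k [kn h]]; exists k.
have mE : measurable E.
  by rewrite EU; apply: bigcup_measurable => k /andP[_ kn]; exact: mAT.
pose th := lam * x - c * v `^ beta.
have pt w : expR th * \1_E w <= \sum_(1 <= k < n.+1) \1_(Bs k `&` A k) w * Z k w.
  have s0 : 0 <= \sum_(1 <= k < n.+1) \1_(Bs k `&` A k) w * Z k w.
    by apply: sumr_ge0 => k _; rewrite mulr_ge0 // indicE.
  rewrite indicE; case: (boolP (w \in E)) => [/set_mem [k0 [k0n Ak0]]|_]; last by rewrite mulr0.
  have [m [Am hmin]] := @min_ex (fun k => A k w) k0 Ak0.
  have m0 : m != 0%N.
    apply/eqP => m0; move: Am; rewrite m0 /A /= S0 => -[h _]; clear -h hx; lra.
  have mk0 : (m <= k0)%N by rewrite leqNgt; apply/negP => /hmin; apply.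
  have mn : (1 <= m <= n)%N by rewrite lt0n m0 (leq_trans mk0) //; case/andP: k0n.
  rewrite (bigD1_seq m) ?mem_index_iota ?iota_uniq //=.
  apply: (@le_trans _ _ (\1_(Bs m `&` A m) w * Z m w)); last first.
    by rewrite lerDl; apply: sumr_ge0 => k _; rewrite mulr_ge0 // indicE.
  have BAm : (Bs m `&` A m) w by split => //; apply/BsP.
  rewrite indicE mem_set // mul1r mulr1 /Z ler_expR.
  case: Am => h1 h2.
  by apply: lerB; rewrite ler_pM2l.
have key : ((expR th)%:E * P E <= 1)%E.
  have <- : (\int[P]_w ((expR th) * \1_E w)%:E = (expR th)%:E * P E)%E.
    under eq_integral do rewrite EFinM.
    rewrite ge0_integralZl //; try by [rewrite integral_indic // setIT | apply/measurable_EFinP; exact: measurable_indic | move=> w _; rewrite lee_fin indicE | rewrite lee_fin ltW // expR_gt0].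
  pose tm k w := if (k <= n)%N then \1_(Bs k `&` A k) w * Z k w else 0.
  have tm0 k w : 0 <= tm k w.
    by rewrite /tm; case: ifP => // _; rewrite mulr_ge0 // indicE.
  have mBk k : (k <= n)%N -> measurable (Bs k).
    by case: k => [|k] kn; [exact: measurableT | exact: mBT (ltnW kn)].
  have mtm k : measurable_fun setT (tm k).
    rewrite /tm; have [kn|kn] := boolP (k <= n)%N; last first.
      exact: measurable_cst.
    apply: measurable_funM; last exact: mZT.
    by apply: measurable_indic; apply: measurableI; [exact: mBk|exact: mAT].
  have sumtm w : \sum_(1 <= k < n.+1) \1_(Bs k `&` A k) w * Z k w = \sum_(1 <= k < n.+1) tm k w.
    by apply: eq_big_nat => k /andP[_ kn]; rewrite /tm -ltnS kn.
  apply: (le_trans (y := (\sum_(1 <= k < n.+1) I1 k)%E)).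
    apply: (le_trans (y := \int[P]_w (\sum_(1 <= k < n.+1) tm k w)%:E)%E).
      apply: ge0_le_integral => //.
      - apply/measurable_EFinP; apply: measurable_funM; first exact: measurable_cst.
        exact: measurable_indic.
      - by apply/measurable_EFinP; apply: measurable_sum => k.
      - by move=> w _; rewrite lee_fin -sumtm.
    under eq_integral do rewrite -sumEFin.
    rewrite ge0_integral_sum //.
    - rewrite le_eqVlt; apply/orP; left; apply/eqP.
      apply: eq_big_nat => k /andP[_ kn]; rewrite /I1 /tm -ltnS kn //.
    - by move=> k; apply/measurable_EFinP.
    - by move=> k w _; rewrite lee_fin.
  apply: le_trans (tele n (leqnn n)); rewrite -[leLHS]adde0; apply: leeD2l.
  by apply: integral_ge0 => w _; rewrite lee_fin mulr_ge0 // indicE.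
have PE0 : (0 <= P E)%E by exact: measure_ge0.
have PE1 : (P E <= 1)%E by exact: probability_le1.
have PEf : P E = (fine (P E))%:E.
  by rewrite fineK // ge0_fin_numE // (le_lt_trans PE1) // ltey.
have Eth : - C * (x / v) `^ (beta / (beta - 1)) = - th.
  by rewrite mulNr /th /C /c /lam exponent_eq.
rewrite Eth PEf lee_fin; move: key; rewrite PEf -EFinM lee_fin => key.
have e1 : expR th * expR (- th) = 1 by rewrite -expRD subrr expR0.
have e0 := expR_gt0 th.
clear -key e1 e0; nra.
Qed.
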